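(* Let $T$ be as in the context. (i) The set of trigonometric polynomials on $\mathbb T^d$ which are smoothly cohomologous to a constant with respect to $T$ is dense in $\mathscr P(d)$ with respect to $\|\cdot\|_\infty$. (ii) The set of elements of $\mathscr Q(d)$ which are smooth coboundaries for $T$ is dense in $\mathscr Q(d)$ with respect to $\|\cdot\|_\infty$.
   Context: Let $d\ge2$, $\mathbb T^d=\mathbb R^d/\mathbb Z^d$ with points as row vectors $\mathbf x=(x_1,\dots,x_d)$. $A$ is a $d\times d$ upper triangular unipotent integer matrix, $A\ne\mathrm{Id}$, $\mathbf b\in\mathbb T^d$, $T\mathbf x=\mathbf xA+\mathbf b$, assumed uniquely ergodic. $\mathscr P(d)$ is the space of trigonometric polynomials on $\mathbb T^d$ and $\mathscr Q(d)=\{\Phi\in\mathscr P(d):\int_0^1\Phi\,dx_d\equiv 0\}$. $\Psi$ is smoothly cohomologous to a constant if $\Psi-\int\Psi\,d\lambda_d=u\circ T-u$ for some $C^\infty$ function $u$; $\Phi$ is a smooth coboundary if $\Phi=u\circ T-u$ with $u$ $C^\infty$. *)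

(* Defs.v *)
From Stdlib Require Import Reals Lra Lia ZArith List.
Open Scope R_scope.

(* Points of R^d are represented as functions nat -> R; only the
   coordinates 0..d-1 are relevant (coordinate j is x_{j+1} of the paper). *)
Definition pt := nat -> R.

(* Complex numbers as pairs (real part, imaginary part). *)
Definition Cx := (R * R)%type.
Definition cadd (z w : Cx) : Cx := (fst z + fst w, snd z + snd w).
Definition csub (z w : Cx) : Cx := (fst z - fst w, snd z - snd w).
Definition cmod (z : Cx) : R := sqrt (fst z * fst z + snd z * snd z).

Definition upd (x : pt) (i : nat) (t : R) : pt :=
  fun j => if Nat.eqb j i then t else x j.

Fixpoint rsum (n : nat) (g : nat -> R) : R :=
  match n with O => 0 | S m => rsum m g + g m end.

(* The affine map T x = x A + b (row vector convention); coordinates >= d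
   are left untouched. *)
Definition Tmap (d : nat) (A : nat -> nat -> Z) (b : pt) (x : pt) : pt :=
  fun j => if Nat.ltb j d then rsum d (fun i => x i * IZR (A i j)) + b j
           else x j.

(* Functions on T^d: depend only on the first d coordinates and are
   Z^d-periodic. *)
Definition TorusFun {V : Type} (d : nat) (f : pt -> V) : Prop :=
  (forall x y : pt, (forall j, (j < d)%nat -> x j = y j) -> f x = f y) /\
  (forall (x : pt) (j : nat), (j < d)%nat -> f (upd x j (x j + 1)) = f x).

Definition contd (d : nat) (f : pt -> R) : Prop :=
  forall (x : pt) (eps : R), 0 < eps -> exists delta, 0 < delta /\
    forall y : pt, (forall j, (j < d)%nat -> Rabs (y j - x j) < delta) ->
                   (forall j, (d <= j)%nat -> y j = x j) ->
                   Rabs (f y - f x) < eps.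

Fixpoint Ck (d n : nat) (f : pt -> R) : Prop :=
  match n with
  | O => contd d f
  | S m => contd d f /\
      forall i, (i < d)%nat -> exists g : pt -> R,
        (forall x : pt, derivable_pt_lim (fun t => f (upd x i (x i + t))) 0 (g x))
        /\ Ck d m g
  end.

Definition Smooth (d : nat) (f : pt -> R) : Prop := forall n, Ck d n f.

Definition SmoothTorusC (d : nat) (u : pt -> Cx) : Prop :=
  TorusFun d u /\ Smooth d (fun x => fst (u x)) /\ Smooth d (fun x => snd (u x)).

(* Trigonometric polynomials: finite sums of c_k e^{2 pi i <k, x>}, k in Z^d. *)
Definition trig_term (d : nat) (kc : (nat -> Z) * Cx) (x : pt) : Cx :=
  let th := 2 * PI * rsum d (fun j => IZR (fst kc j) * x j) in
  let a := fst (snd kc) in let b := snd (snd kc) in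
  (a * cos th - b * sin th, a * sin th + b * cos th).

Definition TrigPoly (d : nat) (f : pt -> Cx) : Prop :=
  exists l : list ((nat -> Z) * Cx), forall x : pt,
    f x = fold_right cadd (0, 0) (map (fun kc => trig_term d kc x) l).

(* Iterated Riemann integral over [0,1]^m in the coordinates 0..m-1
   (other coordinates taken from x): IntUpTo m f x c means the integral is c. *)
Fixpoint IntUpTo (m : nat) (f : pt -> R) (x : pt) (c : R) : Prop :=
  match m with
  | O => c = f x
  | S m' => exists h : R -> R,
      (forall t, IntUpTo m' f (upd x m' t) (h t)) /\
      exists pr : Riemann_integrable h 0 1, RiemannInt pr = c
  end.

Definition LebIntR (d : nat) (f : pt -> R) (c : R) : Prop :=
  forall x : pt, IntUpTo d f x c.
Definition LebIntC (d : nat) (f : pt -> Cx) (c : Cx) : Prop :=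
  LebIntR d (fun x => fst (f x)) (fst c) /\ LebIntR d (fun x => snd (f x)) (snd c).

(* Q(d): trigonometric polynomials with int_0^1 Phi dx_d = 0 identically
   (x_d is coordinate d-1). *)
Definition QPoly (d : nat) (f : pt -> Cx) : Prop :=
  TrigPoly d f /\ forall x : pt,
    (exists pr : Riemann_integrable (fun t => fst (f (upd x (d - 1) t))) 0 1,
        RiemannInt pr = 0) /\
    (exists pr : Riemann_integrable (fun t => snd (f (upd x (d - 1) t))) 0 1,
        RiemannInt pr = 0).

Definition SmoothCoboundary (d : nat) (A : nat -> nat -> Z) (b : pt)
  (f : pt -> Cx) : Prop :=
  exists u : pt -> Cx, SmoothTorusC d u /\
    forall x : pt, f x = csub (u (Tmap d A b x)) (u x).

Definition SmoothCohConst (d : nat) (A : nat -> nat -> Z) (b : pt)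
  (f : pt -> Cx) : Prop :=
  exists c : Cx, LebIntC d f c /\
  exists u : pt -> Cx, SmoothTorusC d u /\
    forall x : pt, csub (f x) c = csub (u (Tmap d A b x)) (u x).

(* Unique ergodicity, via the Riesz representation theorem: T-invariant
   Borel probability measures on T^d correspond exactly to positive,
   normalised, T-invariant linear functionals on Cx(T^d) (real valued). *)
Definition ContTorus (d : nat) (f : pt -> R) : Prop := TorusFun d f /\ contd d f.

Definition InvariantState (d : nat) (A : nat -> nat -> Z) (b : pt)
  (L : (pt -> R) -> R) : Prop :=
  (forall f g (a : R), ContTorus d f -> ContTorus d g ->
     L (fun x => a * f x + g x) = a * L f + L g) /\
  (forall f, ContTorus d f -> (forall x, 0 <= f x) -> 0 <= L f) /\
  L (fun _ => 1) = 1 /\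
  (forall f, ContTorus d f -> L (fun x => f (Tmap d A b x)) = L f).

Definition UniquelyErgodic (d : nat) (A : nat -> nat -> Z) (b : pt) : Prop :=
  (exists L, InvariantState d A b L) /\
  forall L1 L2, InvariantState d A b L1 -> InvariantState d A b L2 ->
    forall f, ContTorus d f -> L1 f = L2 f.

Definition UpperUnipotent (d : nat) (A : nat -> nat -> Z) : Prop :=
  (forall i, (i < d)%nat -> A i i = 1%Z) /\
  (forall i j, (j < i < d)%nat -> A i j = 0%Z).

Definition NotIdentity (d : nat) (A : nat -> nat -> Z) : Prop :=
  exists i j, (i < d)%nat /\ (j < d)%nat /\ i <> j /\ A i j <> 0%Z.

(* Main.v *)
Require Import Defs.
From Stdlib Require Import Reals ZArith List Lra Lia FunctionalExtensionality Classical ClassicalEpsilon.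
From Coquelicot Require Import Coquelicot.
Open Scope R_scope.

Lemma rsum_ext n f g : (forall i, (i < n)%nat -> f i = g i) -> rsum n f = rsum n g.
Proof. induction n; simpl; intros H; [reflexivity|]. rewrite IHn by (intros; apply H; lia). rewrite H by lia. reflexivity. Qed.

Lemma rsum_plus n f g : rsum n (fun i => f i + g i) = rsum n f + rsum n g.
Proof. induction n; simpl; [lra|]. rewrite IHn; lra. Qed.

Lemma rsum_scal n c f : rsum n (fun i => c * f i) = c * rsum n f.
Proof. induction n; simpl; [lra|]. rewrite IHn; lra. Qed.

Lemma rsum_zero n f : (forall i, (i < n)%nat -> f i = 0) -> rsum n f = 0.
Proof. induction n; simpl; intros H; [reflexivity|]. rewrite IHn, H by (intros; try apply H; lia). lra. Qed.

Lemma rsum_single n f j : (j < n)%nat -> (forall i, (i < n)%nat -> i <> j -> f i = 0) -> rsum n f = f j.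
Proof.
  induction n; simpl; intros Hj H; [lia|].
  destruct (Nat.eq_dec j n) as [->|Hne].
  - rewrite rsum_zero by (intros; apply H; lia). lra.
  - rewrite IHn by (try lia; intros; apply H; lia). rewrite (H n) by lia. lra.
Qed.

Lemma rsum_swap n m (f : nat -> nat -> R) :
  rsum n (fun i => rsum m (fun j => f i j)) = rsum m (fun j => rsum n (fun i => f i j)).
Proof.
  induction n; simpl.
  - rewrite rsum_zero; auto.
  - rewrite IHn. rewrite <- rsum_plus. reflexivity.
Qed.

Lemma rsum_telescope n g : rsum n (fun m => g (S m) - g m) = g n - g O.
Proof. induction n; simpl; [lra|]. rewrite IHn; lra. Qed.

Lemma rsum_abs n f : Rabs (rsum n f) <= rsum n (fun i => Rabs (f i)).
Proof. induction n; simpl. rewrite Rabs_R0; lra. eapply Rle_trans; [apply Rabs_triang|]. lra. Qed.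

Lemma rsum_le n f g : (forall i, (i<n)%nat -> f i <= g i) -> rsum n f <= rsum n g.
Proof. induction n; simpl; intros H; [lra|]. specialize (IHn (fun i Hi => H i ltac:(lia))). specialize (H n ltac:(lia)). lra. Qed.

Lemma rsum_const n c : rsum n (fun _ => c) = INR n * c.
Proof. induction n; simpl rsum; [simpl; lra|]. rewrite IHn, S_INR. lra. Qed.

Lemma rsum_upd d (K : nat -> R) x j t : (j < d)%nat ->
  rsum d (fun i => K i * upd x j t i) = rsum d (fun i => K i * x i) + K j * (t - x j).
Proof.
  intros Hj.
  assert (E: forall i, (i < d)%nat -> K i * upd x j t i = K i * x i + (if Nat.eqb i j then K j * (t - x j) else 0)).
  { intros i _. unfold upd. destruct (Nat.eqb_spec i j); subst; lra. }
  rewrite (rsum_ext _ _ _ E), rsum_plus.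
  rewrite (rsum_single d (fun i => if Nat.eqb i j then K j * (t - x j) else 0) j Hj). { cbv beta. rewrite (Nat.eqb_refl j). reflexivity. }
  intros i _ Hij. apply Nat.eqb_neq in Hij. rewrite Hij. reflexivity.
Qed.

Lemma rsum_upd_out d (K : nat -> R) x j t : (d <= j)%nat ->
  rsum d (fun i => K i * upd x j t i) = rsum d (fun i => K i * x i).
Proof.
  intros Hj. apply rsum_ext. intros i Hi. unfold upd. destruct (Nat.eqb_spec i j); [lia|reflexivity].
Qed.


Definition tt (c : Cx) (th : R) : Cx :=
  (fst c * cos th - snd c * sin th, fst c * sin th + snd c * cos th).
Definition theta (d : nat) (k : nat -> Z) (x : pt) : R :=
  2 * PI * rsum d (fun j => IZR (k j) * x j).
Lemma trig_tt d kc x : trig_term d kc x = tt (snd kc) (theta d (fst kc) x).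
Proof. reflexivity. Qed.

Lemma tt_add c th ph : tt c (th + ph) = tt (tt c ph) th.
Proof. unfold tt; simpl. rewrite cos_plus, sin_plus. f_equal; ring. Qed.

Definition cscale (r : R) (c : Cx) : Cx := (r * fst c, r * snd c).

Lemma tt_scale r c th : tt (cscale r c) th = cscale r (tt c th).
Proof. unfold tt, cscale; simpl; f_equal; ring. Qed.

Lemma tt_0 c : tt c 0 = c.
Proof. unfold tt. rewrite cos_0, sin_0. destruct c; simpl; f_equal; ring. Qed.

Lemma cos_sin_2PIZ z : cos (2 * PI * IZR z) = 1 /\ sin (2 * PI * IZR z) = 0.
Proof.
  assert (H: forall n, cos (2 * PI * INR n) = 1 /\ sin (2 * PI * INR n) = 0).
  { intros n. pose proof (cos_period 0 n) as H1. pose proof (sin_period 0 n) as H2.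
    rewrite Rplus_0_l, cos_0 in H1. rewrite Rplus_0_l, sin_0 in H2.
    replace (2 * PI * INR n) with (2 * INR n * PI) by ring. auto. }
  destruct (Z_le_gt_dec 0 z).
  - rewrite <- (Z2Nat.id z) by lia. rewrite <- INR_IZR_INZ. apply H.
  - replace z with (- Z.of_nat (Z.to_nat (- z)))%Z by lia.
    rewrite opp_IZR, <- INR_IZR_INZ.
    replace (2 * PI * - INR (Z.to_nat (- z))) with (- (2 * PI * INR (Z.to_nat (-z)))) by ring.
    rewrite cos_neg, sin_neg. destruct (H (Z.to_nat (-z))) as [-> ->]. split; ring.
Qed.

Lemma tt_2PIZ c z : tt c (2 * PI * IZR z) = c.
Proof. unfold tt. destruct (cos_sin_2PIZ z) as [-> ->]. destruct c; simpl; f_equal; ring. Qed.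

Lemma tt_PI c : tt c PI = cscale (-1) c.
Proof. unfold tt, cscale. rewrite cos_PI, sin_PI. simpl; f_equal; ring. Qed.

Definition TP (d : nat) (l : list ((nat -> Z) * Cx)) (x : pt) : Cx :=
  fold_right cadd (0, 0) (map (fun kc => trig_term d kc x) l).
Definition rp d l x := fst (TP d l x).

Lemma TP_nil d x : TP d nil x = (0,0).
Proof. reflexivity. Qed.
Lemma TP_cons d kc l x : TP d (kc :: l) x = cadd (trig_term d kc x) (TP d l x).
Proof. reflexivity. Qed.

Lemma TP_app d l1 l2 x : TP d (l1 ++ l2) x = cadd (TP d l1 x) (TP d l2 x).
Proof.
  induction l1; simpl app; rewrite ?TP_cons, ?TP_nil.
  - destruct (TP d l2 x); unfold cadd; simpl; f_equal; ring.
  - rewrite IHl1. unfold cadd; simpl; f_equal; ring.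
Qed.

Definition scT (r : R) (kc : (nat -> Z) * Cx) := (fst kc, cscale r (snd kc)).
Lemma TP_scale d r l x : TP d (map (scT r) l) x = cscale r (TP d l x).
Proof.
  induction l; simpl map; rewrite ?TP_cons, ?TP_nil.
  - unfold cscale; simpl; f_equal; ring.
  - rewrite IHl. rewrite !trig_tt. unfold scT; simpl fst; simpl snd. rewrite tt_scale.
    unfold cscale, cadd; simpl; f_equal; ring.
Qed.

Definition imT (kc : (nat -> Z) * Cx) := (fst kc, (snd (snd kc), - fst (snd kc))).
Lemma TP_im d l x : snd (TP d l x) = fst (TP d (map imT l) x).
Proof.
  induction l; simpl map; rewrite ?TP_cons, ?TP_nil; [reflexivity|].
  rewrite !trig_tt. unfold cadd. cbn [fst snd]. rewrite IHl. unfold imT, tt; cbn [fst snd]. ring.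
Qed.

Lemma trig_shift2 d k k' c x y ph : theta d k y = theta d k' x + ph ->
  trig_term d (k, c) y = trig_term d (k', tt c ph) x.
Proof. intros H. rewrite !trig_tt. simpl. rewrite H, tt_add. reflexivity. Qed.
Lemma trig_shift d k c x y ph : theta d k y = theta d k x + ph ->
  trig_term d (k, c) y = trig_term d (k, tt c ph) x.
Proof. apply trig_shift2. Qed.

Lemma trig_kzero d k c x : (forall j, (j < d)%nat -> k j = 0%Z) -> trig_term d (k, c) x = c.
Proof.
  intros H. rewrite trig_tt. unfold theta. rewrite rsum_zero.
  - simpl. rewrite Rmult_0_r. apply tt_0.
  - intros i Hi. rewrite H by auto. simpl; ring.
Qed.


Fixpoint Zsum (n : nat) (g : nat -> Z) : Z :=
  match n with O => 0%Z | S m => (Zsum m g + g m)%Z end.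
Lemma IZR_Zsum n g : IZR (Zsum n g) = rsum n (fun j => IZR (g j)).
Proof. induction n; simpl; [reflexivity|]. rewrite plus_IZR, IHn. reflexivity. Qed.

Lemma Zsum_single n f j : (j < n)%nat -> (forall i, (i < n)%nat -> i <> j -> f i = 0%Z) -> Zsum n f = f j.
Proof.
  intros Hj H. apply eq_IZR. rewrite IZR_Zsum.
  rewrite (rsum_single n (fun i => IZR (f i)) j Hj). reflexivity.
  intros i Hi Hij. rewrite H by auto. reflexivity.
Qed.

Definition kA d (A : nat -> nat -> Z) (k : nat -> Z) : nat -> Z :=
  fun i => Zsum d (fun j => (A i j * k j)%Z).

Lemma theta_T d A b k x : theta d k (Tmap d A b x) = theta d (kA d A k) x + theta d k b.
Proof.
  unfold theta.
  rewrite (rsum_ext d _ (fun j => rsum d (fun i => IZR (k j) * (x i * IZR (A i j))) + IZR (k j) * b j)).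
  2:{ intros j Hj. unfold Tmap. replace (Nat.ltb j d) with true by (symmetry; apply Nat.ltb_lt; auto).
      rewrite rsum_scal. ring. }
  rewrite rsum_plus, rsum_swap.
  rewrite (rsum_ext d (fun i => rsum d (fun j => IZR (k j) * (x i * IZR (A i j))))
             (fun i => IZR (kA d A k i) * x i)).
  - ring.
  - intros i Hi. unfold kA. rewrite IZR_Zsum.
    rewrite Rmult_comm, <- rsum_scal. apply rsum_ext. intros j Hj. rewrite mult_IZR. ring.
Qed.

Definition tT d A (b : pt) (kc : (nat -> Z) * Cx) :=
  (kA d A (fst kc), tt (snd kc) (theta d (fst kc) b)).

Lemma trig_T d A b kc x : trig_term d kc (Tmap d A b x) = trig_term d (tT d A b kc) x.
Proof. destruct kc as [k c]. unfold tT. simpl. apply trig_shift2. apply theta_T. Qed.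

Lemma TP_T d A b l x : TP d l (Tmap d A b x) = TP d (map (tT d A b) l) x.
Proof. induction l; simpl map; rewrite ?TP_cons; [reflexivity|]. rewrite IHl, trig_T. reflexivity. Qed.

Definition Titer d A b n (x : pt) : pt := Nat.iter n (Tmap d A b) x.
Definition Literate d A b n l := Nat.iter n (map (tT d A b)) l.

Lemma TP_Titer d A b n : forall l x, TP d l (Titer d A b n x) = TP d (Literate d A b n l) x.
Proof.
  induction n; intros l x; [reflexivity|].
  unfold Titer, Literate. rewrite Nat.iter_succ, Nat.iter_succ_r. fold (Titer d A b n x).
  rewrite TP_T. apply IHn.
Qed.

Lemma Titer_S d A b n x : Titer d A b n (Tmap d A b x) = Titer d A b (S n) x.
Proof. unfold Titer. rewrite Nat.iter_succ_r. reflexivity. Qed.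

Definition vadd (x w : pt) : pt := fun j => x j + w j.

Lemma theta_vadd d k x w : theta d k (vadd x w) = theta d k x + theta d k w.
Proof. unfold theta, vadd. rewrite <- Rmult_plus_distr_l, <- rsum_plus. f_equal. apply rsum_ext. intros; ring. Qed.

Lemma trig_vadd d k c x w : trig_term d (k, c) (vadd x w) = trig_term d (k, tt c (theta d k w)) x.
Proof. apply trig_shift. apply theta_vadd. Qed.

Lemma theta_agree d k x y : (forall j, (j < d)%nat -> x j = y j) -> theta d k x = theta d k y.
Proof. intros H. unfold theta. f_equal. apply rsum_ext. intros j Hj. rewrite H; auto. Qed.

Lemma theta_upd1 d k x j : (j < d)%nat -> theta d k (upd x j (x j + 1)) = theta d k x + 2 * PI * IZR (k j).
Proof. intros Hj. unfold theta. rewrite rsum_upd by auto. ring. Qed.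

Lemma TP_torus d l : TorusFun d (TP d l).
Proof.
  split.
  - intros x y H. induction l; [reflexivity|]. rewrite !TP_cons, IHl, !trig_tt.
    rewrite (theta_agree d _ x y H). reflexivity.
  - intros x j Hj. induction l; [reflexivity|]. rewrite !TP_cons, IHl. destruct a as [k c].
    rewrite (trig_shift d k c x _ (2 * PI * IZR (k j))). rewrite tt_2PIZ. reflexivity.
    apply theta_upd1; auto.
Qed.


Lemma rp_cons d kc l x : rp d (kc :: l) x = fst (trig_term d kc x) + rp d l x.
Proof. reflexivity. Qed.

Lemma tt_lip c u v : Rabs (fst (tt c u) - fst (tt c v)) <= (Rabs (fst c) + Rabs (snd c)) * Rabs (u - v).
Proof.
  destruct (MVT_abs (fun t => fst c * cos t - snd c * sin t) (fun t => - fst c * sin t - snd c * cos t) v u)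
    as [z [Hz _]].
  { intros z _. apply is_derive_Reals. auto_derive; auto. ring. }
  unfold tt; simpl. rewrite Hz. apply Rmult_le_compat_r; [apply Rabs_pos|].
  pose proof (SIN_bound z). pose proof (COS_bound z).
  assert (Hs: Rabs (sin z) <= 1) by (apply Rabs_le; lra).
  assert (Hc: Rabs (cos z) <= 1) by (apply Rabs_le; lra).
  assert (Hm: forall p q, Rabs q <= 1 -> Rabs (p * q) <= Rabs p).
  { intros p q Hq. rewrite Rabs_mult. pose proof (Rabs_pos p). pose proof (Rabs_pos q). nra. }
  unfold Rminus. eapply Rle_trans; [apply Rabs_triang|]. rewrite Rabs_Ropp.
  apply Rplus_le_compat.
  - rewrite <- Ropp_mult_distr_l, Rabs_Ropp. apply Hm; auto.
  - apply Hm; auto.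
Qed.

Lemma theta_lip d k x y del : (forall j, (j < d)%nat -> Rabs (y j - x j) <= del) ->
  Rabs (theta d k y - theta d k x) <= 2 * PI * rsum d (fun j => Rabs (IZR (k j))) * del.
Proof.
  intros H. unfold theta. rewrite <- Rmult_minus_distr_l.
  rewrite Rabs_mult, Rabs_right by (pose proof PI_RGT_0; lra).
  rewrite (Rmult_assoc (2 * PI)). apply Rmult_le_compat_l; [pose proof PI_RGT_0; lra|].
  replace (rsum d (fun j => IZR (k j) * y j) - rsum d (fun j => IZR (k j) * x j))
    with (rsum d (fun j => IZR (k j) * (y j - x j))).
  2:{ replace (rsum d (fun j => IZR (k j) * x j)) with (-1 * rsum d (fun j => -1 * (IZR (k j) * x j))).
      2:{ rewrite rsum_scal. ring. }
      unfold Rminus.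
      replace (- (-1 * rsum d (fun i => -1 * (IZR (k i) * x i)))) with (rsum d (fun i => -1 * (IZR (k i) * x i))) by ring.
      rewrite <- rsum_plus. apply rsum_ext. intros. ring. }
  eapply Rle_trans; [apply rsum_abs|]. rewrite Rmult_comm, <- rsum_scal.
  apply rsum_le. intros j Hj. rewrite Rabs_mult. specialize (H j Hj).
  pose proof (Rabs_pos (IZR (k j))). pose proof (Rabs_pos (y j - x j)). nra.
Qed.

Lemma rp_lip d l : exists K, 0 <= K /\ forall x y del, 0 <= del ->
  (forall j, (j < d)%nat -> Rabs (y j - x j) <= del) -> Rabs (rp d l y - rp d l x) <= K * del.
Proof.
  induction l as [|[k c] l IH].
  - exists 0. split; [lra|]. intros. unfold rp, TP; simpl. rewrite Rminus_0_r, Rabs_R0.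
    nra.
  - destruct IH as [K [HK IH]].
    set (S := rsum d (fun j => Rabs (IZR (k j)))).
    assert (HS: 0 <= S) by (unfold S; rewrite <- (rsum_zero d (fun _ => 0)) by auto;
                           apply rsum_le; intros; apply Rabs_pos).
    exists ((Rabs (fst c) + Rabs (snd c)) * (2 * PI * S) + K). split.
    { pose proof PI_RGT_0. pose proof (Rabs_pos (fst c)). pose proof (Rabs_pos (snd c)).
      apply Rplus_le_le_0_compat; auto. apply Rmult_le_pos; [lra|]. apply Rmult_le_pos; lra. }
    intros x y del Hdel H.
    rewrite !rp_cons, !trig_tt. cbn [fst snd].
    replace (fst (tt c (theta d k y)) + rp d l y - (fst (tt c (theta d k x)) + rp d l x))
      with ((fst (tt c (theta d k y)) - fst (tt c (theta d k x))) + (rp d l y - rp d l x)) by ring.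
    eapply Rle_trans; [apply Rabs_triang|]. rewrite Rmult_plus_distr_r.
    apply Rplus_le_compat; [|apply IH; auto].
    eapply Rle_trans; [apply tt_lip|]. rewrite Rmult_assoc. apply Rmult_le_compat_l.
    + pose proof (Rabs_pos (fst c)). pose proof (Rabs_pos (snd c)). lra.
    + apply theta_lip; auto.
Qed.


Lemma rp_contd d l : contd d (rp d l).
Proof.
  destruct (rp_lip d l) as [K [HK H]].
  intros x eps Heps. exists (eps / (K + 1)). split.
  { apply Rdiv_lt_0_compat; lra. }
  intros y Hy _.
  assert (Hd: 0 <= eps / (K + 1)) by (apply Rlt_le, Rdiv_lt_0_compat; lra).
  eapply Rle_lt_trans. apply (H x y (eps / (K + 1))); auto.
  intros j Hj; apply Rlt_le; auto.
  apply Rle_lt_trans with (K * (eps / (K+1))); [lra|].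
  unfold Rdiv. rewrite <- Rmult_assoc. apply Rmult_lt_reg_r with (K + 1); [lra|].
  rewrite Rmult_assoc, Rinv_l by lra. nra.
Qed.

Definition dT (i : nat) (kc : (nat -> Z) * Cx) :=
  let s := 2 * PI * IZR (fst kc i) in (fst kc, (- s * snd (snd kc), s * fst (snd kc))).

Lemma theta_upd_t d k x i t : (i < d)%nat ->
  theta d k (upd x i (x i + t)) = theta d k x + 2 * PI * IZR (k i) * t.
Proof. intros Hi. unfold theta. rewrite rsum_upd by auto. ring. Qed.

Lemma term_deriv d kc x i : (i < d)%nat ->
  derivable_pt_lim (fun t => fst (trig_term d kc (upd x i (x i + t)))) 0 (fst (trig_term d (dT i kc) x)).
Proof.
  intros Hi. destruct kc as [k [a b0]]. apply is_derive_Reals.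
  apply (is_derive_ext 
     (fun t => a * cos (theta d k x + 2 * PI * IZR (k i) * t) - b0 * sin (theta d k x + 2 * PI * IZR (k i) * t))).
  { intros t. rewrite trig_tt. cbn [fst snd].
      rewrite theta_upd_t by auto. reflexivity. }
  rewrite trig_tt. unfold dT, tt. cbn [fst snd].
  generalize (theta d k x) (2 * PI * IZR (k i)). intros th s.
  auto_derive; auto. rewrite Rmult_0_r, Rplus_0_r. ring.
Qed.

Lemma rp_deriv d l x i : (i < d)%nat ->
  derivable_pt_lim (fun t => rp d l (upd x i (x i + t))) 0 (rp d (map (dT i) l) x).
Proof.
  intros Hi. induction l as [|kc l IH].
  - unfold rp, TP; simpl. apply derivable_pt_lim_const.
  - simpl map. rewrite rp_cons.
    replace (fun t => rp d (kc :: l) (upd x i (x i + t)))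
      with (fun t => fst (trig_term d kc (upd x i (x i + t))) + rp d l (upd x i (x i + t))).
    2:{ apply functional_extensionality. intros. rewrite rp_cons. reflexivity. }
    apply (derivable_pt_lim_plus (fun t => fst (trig_term d kc (upd x i (x i + t))))
                                  (fun t => rp d l (upd x i (x i + t)))); auto.
    apply term_deriv; auto.
Qed.

Lemma rp_Ck d n : forall l, Ck d n (rp d l).
Proof.
  induction n; intros l; simpl.
  - apply rp_contd.
  - split; [apply rp_contd|]. intros i Hi. exists (rp d (map (dT i) l)). split; auto.
    intros x. apply rp_deriv; auto.
Qed.

Lemma TP_smooth d l : SmoothTorusC d (TP d l).
Proof.
  split; [apply TP_torus|]. split.
  - intros n. apply (rp_Ck d n l).
  - intros n. replace (fun x => snd (TP d l x)) with (rp d (map imT l)).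
    apply rp_Ck. apply functional_extensionality. intros x. rewrite TP_im. reflexivity.
Qed.

Lemma rp_torus d l : TorusFun d (rp d l).
Proof.
  destruct (TP_torus d l) as [H1 H2]. split.
  - intros x y H. unfold rp. rewrite (H1 x y H). reflexivity.
  - intros x j Hj. unfold rp. rewrite H2; auto.
Qed.

Lemma rp_cont d l : ContTorus d (rp d l).
Proof. split; [apply rp_torus|apply rp_contd]. Qed.


Lemma theta_upd d k x j t : (j < d)%nat ->
  theta d k (upd x j t) = (theta d k x - 2 * PI * IZR (k j) * x j) + 2 * PI * IZR (k j) * t.
Proof. intros Hj. unfold theta. rewrite rsum_upd by auto. ring. Qed.

Lemma is_RInt_val (f : R -> R) a b v w : is_RInt f a b v -> v = w -> is_RInt f a b w.
Proof. intros H ->; exact H. Qed.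

Lemma term_int d k c x j : (j < d)%nat ->
  is_RInt (fun t => fst (trig_term d (k, c) (upd x j t))) 0 1
    (if Z.eqb (k j) 0 then fst (trig_term d (k, c) x) else 0).
Proof.
  intros Hj. destruct (Z.eqb_spec (k j) 0) as [Hk|Hk].
  - apply (is_RInt_ext (fun _ => fst (trig_term d (k, c) x))).
    { intros t _. rewrite !trig_tt. cbn [fst snd]. rewrite theta_upd by auto. rewrite Hk. 
      f_equal. f_equal. simpl. ring. }
    pose proof (is_RInt_const 0 1 (fst (trig_term d (k, c) x))) as H.
    assert (Es : forall v : R, scal (1 - 0) v = v).
    { intros v. rewrite Rminus_0_r. exact (scal_one v). }
    rewrite Es in H. exact H.
  - set (s := 2 * PI * IZR (k j)). set (th := theta d k x - s * x j).
    assert (Hs: s <> 0).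
    { unfold s. pose proof PI_RGT_0. apply Rmult_integral_contrapositive. split; [lra|]. apply not_0_IZR; auto. }
    apply (is_RInt_ext (fun t => fst c * cos (th + s * t) - snd c * sin (th + s * t))).
    { intros t _. rewrite trig_tt. cbn [fst snd]. rewrite theta_upd by auto. unfold tt, th, s. cbn [fst snd].
      reflexivity. }
    pose proof (is_RInt_derive (fun t => (fst c * sin (th + s * t) + snd c * cos (th + s * t)) / s)
       (fun t => fst c * cos (th + s * t) - snd c * sin (th + s * t)) 0 1) as H.
    cbv beta in H. eapply is_RInt_val. apply H.
    + intros t _. auto_derive; auto. field. auto.
    + intros t _. 
      assert (Hd: ex_derive (fun t => fst c * cos (th + s * t) - snd c * sin (th + s * t)) t) by (auto_derive; auto).
      exact (ex_derive_continuous (K:=R_AbsRing) (V:=R_NormedModule) _ t Hd).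
    + rewrite Rmult_1_r, Rmult_0_r, Rplus_0_r.
      assert (E1: sin (th + s) = sin th /\ cos (th + s) = cos th).
      { unfold s. rewrite sin_plus, cos_plus. destruct (cos_sin_2PIZ (k j)) as [-> ->]. split; ring. }
      destruct E1 as [-> ->].
      unfold minus, plus, opp; simpl. field. auto.
Qed.

Lemma is_RInt_plus_R (f g : R -> R) a b u v : is_RInt f a b u -> is_RInt g a b v ->
  is_RInt (fun t => f t + g t) a b (u + v).
Proof. intros H1 H2. exact (is_RInt_plus f g a b u v H1 H2). Qed.
Lemma rp_int d l x j : (j < d)%nat ->
  is_RInt (fun t => rp d l (upd x j t)) 0 1 (rp d (filter (fun kc => Z.eqb (fst kc j) 0) l) x).
Proof.
  intros Hj. induction l as [|[k c] l IH].
  - cbn [filter]. apply (is_RInt_ext (fun _ => 0)). { intros; reflexivity. }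
    eapply is_RInt_val. apply (is_RInt_const 0 1 0).
    change (rp d nil x) with 0. unfold scal. cbn. unfold mult. cbn. ring.
  - assert (E: forall t, rp d ((k, c) :: l) (upd x j t) = fst (trig_term d (k, c) (upd x j t)) + rp d l (upd x j t)).
    { intros t. apply rp_cons. }
    apply (is_RInt_ext (fun t => fst (trig_term d (k, c) (upd x j t)) + rp d l (upd x j t))).
    { intros t _. symmetry. apply E. }
    eapply is_RInt_val. apply is_RInt_plus_R. apply term_int; auto. apply IH.
    cbn [filter fst]. destruct (Z.eqb (k j) 0).
    + rewrite rp_cons. reflexivity.
    + apply Rplus_0_l.
Qed.

Lemma RiemInt_of (f : R -> R) v : is_RInt f 0 1 v -> exists pr : Riemann_integrable f 0 1, RiemannInt pr = v.
Proof.
  intros H. assert (pr : Riemann_integrable f 0 1) by (apply ex_RInt_Reals_0; exists v; auto).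
  exists pr. rewrite <- RInt_Reals. apply is_RInt_unique. auto.
Qed.

Lemma RiemInt_val (f : R -> R) v (pr : Riemann_integrable f 0 1) : is_RInt f 0 1 v -> RiemannInt pr = v.
Proof. intros H. rewrite <- RInt_Reals. apply is_RInt_unique. auto. Qed.

Definition zp (m : nat) (k : nat -> Z) : bool := forallb (fun j => Z.eqb (k j) 0) (seq 0 m).

Lemma zp_S m k : zp (S m) k = andb (zp m k) (Z.eqb (k m) 0).
Proof. unfold zp. rewrite seq_S, forallb_app. simpl. rewrite Bool.andb_true_r. reflexivity. Qed.

Lemma zp_true m k : zp m k = true -> forall j, (j < m)%nat -> k j = 0%Z.
Proof.
  intros H j Hj. unfold zp in H. rewrite forallb_forall in H.
  apply Z.eqb_eq. apply H. apply in_seq. lia.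
Qed.

Lemma zp_false m k : zp m k = false -> exists j, (j < m)%nat /\ k j <> 0%Z.
Proof.
  intros H. destruct (classic (exists j, (j < m)%nat /\ k j <> 0%Z)) as [E|E]; auto.
  exfalso. assert (zp m k = true); [|congruence].
  unfold zp. apply forallb_forall. intros j Hj. apply in_seq in Hj.
  apply Z.eqb_eq. destruct (Z.eq_dec (k j) 0); auto. exfalso; apply E. exists j. split; [lia|auto].
Qed.

Lemma filter_filter' {X} (p q : X -> bool) l : filter p (filter q l) = filter (fun a => andb (q a) (p a)) l.
Proof. induction l; simpl; auto. destruct (q a); simpl; destruct (p a); simpl; rewrite ?IHl; auto. Qed.

Lemma int_upto d : forall m, (m <= d)%nat -> forall l x,
  IntUpTo m (rp d l) x (rp d (filter (fun kc => zp m (fst kc)) l) x).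
Proof.
  induction m; intros Hm l x.
  - simpl. f_equal. induction l; simpl; f_equal; auto.
  - simpl. exists (fun t => rp d (filter (fun kc => zp m (fst kc)) l) (upd x m t)). split.
    + intros t. apply IHm. lia.
    + apply RiemInt_of. eapply is_RInt_val. apply rp_int. lia.
      rewrite filter_filter'. f_equal. apply filter_ext. intros [k c]. simpl. rewrite zp_S. reflexivity.
Qed.

Lemma TP_kzero_const d l x y : (forall kc, In kc l -> zp d (fst kc) = true) -> TP d l x = TP d l y.
Proof.
  intros H. induction l as [|[k c] l IH]; [reflexivity|].
  rewrite !TP_cons, IH by (intros; apply H; right; auto).
  rewrite !trig_kzero; auto; apply zp_true; apply (H (k, c)); left; auto.
Qed.


Lemma abs_le_iff a b : Rabs a <= b <-> - b <= a <= b.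
Proof. unfold Rabs; destruct (Rcase_abs a); split; intros; lra. Qed.
Lemma abs_lt_iff a b : Rabs a < b <-> - b < a < b.
Proof. unfold Rabs; destruct (Rcase_abs a); split; intros; lra. Qed.
Lemma abs_sub_lt_iff a l e : Rabs (a - l) < e <-> l - e < a < l + e.
Proof. rewrite abs_lt_iff. split; intros; lra. Qed.

Definition IsUltra (U : (nat -> Prop) -> Prop) : Prop :=
  U (fun _ => True) /\ ~ U (fun _ => False) /\
  (forall P Q, U P -> U Q -> U (fun n => P n /\ Q n)) /\
  (forall P Q : nat -> Prop, (forall n, P n -> Q n) -> U P -> U Q) /\
  (forall P, U P \/ U (fun n => ~ P n)) /\
  (forall N, U (fun n => (N <= n)%nat)).

Section Ultra.
Variable U : (nat -> Prop) -> Prop.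
Hypothesis HU : IsUltra U.

Lemma U_and P Q : U P -> U Q -> U (fun n => P n /\ Q n).
Proof. destruct HU as (_ & _ & H & _). apply H. Qed.
Lemma U_mono (P Q : nat -> Prop) : (forall n, P n -> Q n) -> U P -> U Q.
Proof. destruct HU as (_ & _ & _ & H & _). apply H. Qed.
Lemma U_ne P : U P -> exists n, P n.
Proof.
  intros H. destruct (classic (exists n, P n)) as [E|E]; auto.
  exfalso. destruct HU as (_ & H2 & _). apply H2. apply (U_mono P); auto.
  intros n Pn. apply E. eauto.
Qed.
Lemma U_ultra P : U P \/ U (fun n => ~ P n).
Proof. destruct HU as (_ & _ & _ & _ & H & _). apply H. Qed.
Lemma U_tail N : U (fun n => (N <= n)%nat).
Proof. destruct HU as (_ & _ & _ & _ & _ & H). apply H. Qed.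
Lemma U_all (P : nat -> Prop) : (forall n, P n) -> U P.
Proof. intros H. destruct HU as (H1 & _). apply (U_mono (fun _ => True)); auto. Qed.

Definition Uconv (a : nat -> R) (l : R) : Prop := forall eps, 0 < eps -> U (fun n => Rabs (a n - l) < eps).

Lemma Uconv_unique a l1 l2 : Uconv a l1 -> Uconv a l2 -> l1 = l2.
Proof.
  intros H1 H2. destruct (Req_dec l1 l2) as [E|E]; auto. exfalso.
  set (e := Rabs (l1 - l2) / 2).
  assert (He: 0 < e) by (unfold e; apply Rdiv_lt_0_compat; [apply Rabs_pos_lt; lra|lra]).
  destruct (U_ne _ (U_and _ _ (H1 e He) (H2 e He))) as [n [A B]].
  assert (Rabs (l1 - l2) <= Rabs (a n - l1) + Rabs (a n - l2)).
  { replace (l1 - l2) with (-(a n - l1) + (a n - l2)) by ring.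
    eapply Rle_trans; [apply Rabs_triang|]. rewrite Rabs_Ropp. lra. }
  unfold e in *. lra.
Qed.

Lemma Uconv_exists a M : (forall n, Rabs (a n) <= M) -> exists l, Uconv a l.
Proof.
  intros HM.
  set (E := fun r => U (fun n => r <= a n)).
  assert (Hb: bound E).
  { exists M. intros r Er. destruct (Rle_dec r M) as [|Hr]; auto. exfalso.
    destruct (U_ne _ Er) as [n Hn]. specialize (HM n). apply abs_le_iff in HM. lra. }
  assert (Hne: exists r, E r).
  { exists (-M). apply U_all. intros n. specialize (HM n). apply abs_le_iff in HM. lra. }
  destruct (completeness E Hb Hne) as [l [Hub Hlub]].
  exists l. intros eps Heps.
  assert (H1: U (fun n => l - eps < a n)).
  { destruct (classic (exists r, E r /\ l - eps < r)) as [[r [Er Hr]]|N].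
    - apply (U_mono _ _ (fun n H => Rlt_le_trans _ _ _ Hr H) Er).
    - exfalso. assert (l <= l - eps); [|lra]. apply Hlub. intros r Er.
      destruct (Rle_dec r (l - eps)); auto. exfalso; apply N; exists r; split; auto; lra. }
  assert (H2: U (fun n => a n < l + eps)).
  { destruct (U_ultra (fun n => a n < l + eps)) as [H|H]; auto. exfalso.
    assert (E (l + eps)). { apply (U_mono _ _ (fun n H => Rnot_lt_le _ _ H) H). }
    specialize (Hub _ H0). lra. }
  apply (U_mono _ _ (fun n H => proj2 (abs_sub_lt_iff _ _ _) H)).
  apply (U_and _ _ H1 H2).
Qed.

Lemma Uconv_lin a b la lb r : Uconv a la -> Uconv b lb -> Uconv (fun n => r * a n + b n) (r * la + lb).
Proof.
  intros Ha Hb eps Heps.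
  set (e := eps / (2 * (Rabs r + 1))).
  assert (He: 0 < e) by (unfold e; apply Rdiv_lt_0_compat; [lra|pose proof (Rabs_pos r); lra]).
  assert (He2: 0 < eps / 2) by lra.
  apply (U_mono (fun n => Rabs (a n - la) < e /\ Rabs (b n - lb) < eps / 2)); [|apply U_and; auto].
  intros n [A B].
  replace (r * a n + b n - (r * la + lb)) with (r * (a n - la) + (b n - lb)) by ring.
  eapply Rle_lt_trans; [apply Rabs_triang|]. rewrite Rabs_mult.
  assert (Rabs r * Rabs (a n - la) <= Rabs r * e) by (apply Rmult_le_compat_l; [apply Rabs_pos|lra]).
  assert (Rabs r * e < eps / 2).
  { unfold e. pose proof (Rabs_pos r).
    apply Rlt_le_trans with ((Rabs r + 1) * (eps / (2 * (Rabs r + 1)))).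
    - fold e. nra.
    - right. field. lra. }
  lra.
Qed.

Lemma Uconv_nonneg a l : (forall n, 0 <= a n) -> Uconv a l -> 0 <= l.
Proof.
  intros H Hc. destruct (Rle_dec 0 l) as [|Hl]; auto. exfalso.
  destruct (U_ne _ (Hc (- l) ltac:(lra))) as [n Hn]. specialize (H n).
  apply abs_sub_lt_iff in Hn. lra.
Qed.

Lemma Uconv_const c : Uconv (fun _ => c) c.
Proof. intros eps Heps. apply U_all. intros n. rewrite Rminus_diag, Rabs_R0. auto. Qed.

Lemma Uconv_close a b l C : Uconv a l -> (forall n, Rabs (b n - a n) <= C / INR (S n)) -> Uconv b l.
Proof.
  intros Ha Hb eps Heps.
  assert (HC: 0 <= C). { specialize (Hb O). pose proof (Rabs_pos (b O - a O)). simpl in Hb.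
    rewrite Rdiv_1_r in Hb. lra. }
  destruct (archimed (2 * C / eps)) as [Hup _].
  set (N := Z.to_nat (up (2 * C / eps))).
  assert (HN: 2 * C / eps < INR (S N)).
  { rewrite S_INR. unfold N. destruct (Z_le_gt_dec 0 (up (2 * C / eps))).
    - rewrite INR_IZR_INZ, Z2Nat.id by auto. lra.
    - assert (2 * C / eps >= 0) by (apply Rle_ge; unfold Rdiv; apply Rmult_le_pos; [lra|apply Rlt_le, Rinv_0_lt_compat; lra]).
      assert (IZR (up (2 * C / eps)) <= -1) by (apply IZR_le; lia). lra. }
  apply (U_mono (fun n => Rabs (a n - l) < eps / 2 /\ (N <= n)%nat)); [|apply U_and; [apply Ha; lra|apply U_tail]].
  intros n [A B].
  replace (b n - l) with ((b n - a n) + (a n - l)) by ring.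
  eapply Rle_lt_trans; [apply Rabs_triang|].
  assert (C / INR (S n) < eps / 2).
  { assert (INR (S N) <= INR (S n)) by (apply le_INR; lia).
    assert (0 < INR (S N)) by (apply lt_0_INR; lia).
    apply Rmult_lt_reg_r with (INR (S n)); [lra|]. unfold Rdiv. rewrite Rmult_assoc, Rinv_l by lra.
    apply Rlt_le_trans with (eps / 2 * INR (S N)).
    - apply Rmult_lt_reg_l with (2 / eps). apply Rdiv_lt_0_compat; lra.
      replace (2 / eps * (eps / 2 * INR (S N))) with (INR (S N)) by (field; lra).
      replace (2 / eps * (C * 1)) with (2 * C / eps) by (field; lra). lra.
    - apply Rmult_le_compat_l; lra. }
  specialize (Hb n). lra.
Qed.

Lemma Uconv_lower a l del : Uconv a l -> (forall n, del <= Rabs (a n)) -> del <= Rabs l.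
Proof.
  intros Ha H. destruct (Rle_dec del (Rabs l)) as [|Hl]; auto. exfalso.
  destruct (U_ne _ (Ha (del - Rabs l) ltac:(lra))) as [n Hn]. specialize (H n).
  assert (Rabs (a n) <= Rabs (a n - l) + Rabs l).
  { replace (a n) with ((a n - l) + l) at 1 by ring. apply Rabs_triang. }
  lra.
Qed.

Definition Ulim (a : nat -> R) : R :=
  match excluded_middle_informative (exists l, Uconv a l) with
  | left H => proj1_sig (constructive_indefinite_description _ H)
  | right _ => 0 end.

Lemma Ulim_spec a : (exists l, Uconv a l) -> Uconv a (Ulim a).
Proof.
  intros H. unfold Ulim. destruct (excluded_middle_informative _) as [H'|H']; [|contradiction].
  apply (proj2_sig (constructive_indefinite_description _ H')).
Qed.

Lemma Ulim_eq a l : Uconv a l -> Ulim a = l.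
Proof. intros H. apply (Uconv_unique a); auto. apply Ulim_spec. eauto. Qed.

End Ultra.


Lemma upd_upd (x : pt) j s t : upd (upd x j s) j t = upd x j t.
Proof. apply functional_extensionality. intros i. unfold upd. destruct (Nat.eqb i j); auto. Qed.
Lemma upd_same (x : pt) j s : upd x j s j = s.
Proof. unfold upd. rewrite Nat.eqb_refl. auto. Qed.
Lemma upd_id (x : pt) j : upd x j (x j) = x.
Proof. apply functional_extensionality. intros i. unfold upd. destruct (Nat.eqb_spec i j); subst; auto. Qed.

Lemma per_nat {V} d (f : pt -> V) x j : TorusFun d f -> (j < d)%nat ->
  forall n, f (upd x j (x j + INR n)) = f x.
Proof.
  intros [_ Hp] Hj n. induction n.
  - simpl. rewrite Rplus_0_r, upd_id. auto.
  - rewrite S_INR. rewrite <- IHn. rewrite <- (Hp (upd x j (x j + INR n)) j Hj).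
    rewrite upd_upd, upd_same. f_equal. f_equal. ring.
Qed.

Lemma per_Z {V} d (f : pt -> V) x j z : TorusFun d f -> (j < d)%nat ->
  f (upd x j (x j + IZR z)) = f x.
Proof.
  intros Hf Hj. destruct (Z_le_gt_dec 0 z).
  - rewrite <- (Z2Nat.id z) by lia. rewrite <- INR_IZR_INZ. apply (per_nat d); auto.
  - set (n := Z.to_nat (- z)).
    assert (Hz: IZR z = - INR n). { unfold n. rewrite INR_IZR_INZ, Z2Nat.id by lia. rewrite opp_IZR. ring. }
    rewrite <- (@per_nat V d f (upd x j (x j + IZR z)) j Hf Hj n).
    rewrite upd_upd, upd_same. rewrite Hz. f_equal. replace (x j + - INR n + INR n) with (x j) by ring.
    rewrite upd_id. auto.
Qed.

Lemma per_shift {V} d (f : pt -> V) (x y : pt) : TorusFun d f ->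
  (forall j, (j < d)%nat -> exists z, y j = x j + IZR z) -> f y = f x.
Proof.
  intros Hf H.
  set (mix := fun m (j : nat) => if Nat.ltb j m then y j else x j).
  assert (Hm: forall m, (m <= d)%nat -> f (mix m) = f x).
  { induction m; intros Hmd.
    - change (mix O) with x. reflexivity.
    - destruct (H m ltac:(lia)) as [z Hz].
      assert (E: mix (S m) = upd (mix m) m (mix m m + IZR z)).
      { apply functional_extensionality. intros j. unfold mix, upd.
        destruct (Nat.eqb_spec j m).
        + subst. destruct (Nat.ltb_spec m (S m)); [|lia]. destruct (Nat.ltb_spec m m); [lia|]. auto.
        + destruct (Nat.ltb_spec j (S m)); destruct (Nat.ltb_spec j m); auto; lia. }
      rewrite E. rewrite (per_Z d); auto; try lia. apply IHm. lia. }
  rewrite <- (Hm d ltac:(lia)). destruct Hf as [Ha _]. apply Ha.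
  intros j Hj. unfold mix. destruct (Nat.ltb_spec j d); [auto|lia].
Qed.

Definition frac_pt d (y : pt) : pt := fun j => if Nat.ltb j d then y j - IZR (up (y j)) + 1 else 0.

Lemma frac_pt_bound d y j : (j < d)%nat -> 0 <= frac_pt d y j <= 1.
Proof.
  intros Hj. unfold frac_pt. destruct (Nat.ltb_spec j d); [|lia].
  destruct (archimed (y j)). lra.
Qed.

Lemma frac_pt_eq d (f : pt -> R) y : TorusFun d f -> f (frac_pt d y) = f y.
Proof.
  intros Hf. apply per_shift with d; auto. intros j Hj. exists (1 - up (y j))%Z.
  unfold frac_pt. destruct (Nat.ltb_spec j d); [|lia]. rewrite minus_IZR. ring.
Qed.

Section Bnd.
Variable U : (nat -> Prop) -> Prop.
Hypothesis HU : IsUltra U.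

Lemma U_fin d (P : nat -> nat -> Prop) : (forall j, (j < d)%nat -> U (P j)) -> U (fun m => forall j, (j < d)%nat -> P j m).
Proof.
  induction d; intros H.
  - apply U_all; auto. intros; lia.
  - apply (U_mono U HU (fun m => (forall j, (j < d)%nat -> P j m) /\ P d m)).
    + intros m [A B] j Hj. destruct (Nat.eq_dec j d); subst; auto. apply A. lia.
    + apply U_and; auto.
Qed.

Lemma cont_bounded d f : ContTorus d f -> exists M, forall x, Rabs (f x) <= M.
Proof.
  intros [Ht Hc]. destruct (classic (exists M, forall x, Rabs (f x) <= M)) as [E|E]; auto. exfalso.
  assert (H: forall m : nat, exists x, INR m < Rabs (f x)).
  { intros m. destruct (classic (exists x, INR m < Rabs (f x))) as [E2|E2]; auto. exfalso. apply E.
    exists (INR m). intros x. destruct (Rle_dec (Rabs (f x)) (INR m)); auto. exfalso; apply E2; exists x; lra. }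
  set (ys := fun m => proj1_sig (constructive_indefinite_description _ (H m))).
  assert (Hys: forall m, INR m < Rabs (f (ys m))) by (intros m; apply (proj2_sig (constructive_indefinite_description _ (H m)))).
  set (zs := fun m => frac_pt d (ys m)).
  set (p := fun j => if Nat.ltb j d then Ulim U (fun m => zs m j) else 0).
  assert (Hp: forall j, (j < d)%nat -> Uconv U (fun m => zs m j) (p j)).
  { intros j Hj. unfold p. destruct (Nat.ltb_spec j d); [|lia]. apply Ulim_spec; auto.
    apply Uconv_exists with 1; auto. intros m. apply abs_le_iff. pose proof (frac_pt_bound d (ys m) j Hj). unfold zs. lra. }
  destruct (Hc p 1 ltac:(lra)) as [del [Hdel Hcd]].
  destruct (archimed (Rabs (f p) + 1)) as [Hup _].
  set (K := Z.to_nat (up (Rabs (f p) + 1))).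
  assert (HK: Rabs (f p) + 1 < INR K).
  { unfold K. rewrite INR_IZR_INZ, Z2Nat.id; auto. 
    apply le_IZR. pose proof (Rabs_pos (f p)). lra. }
  destruct (U_ne U HU _ (U_and U HU _ _ (U_fin d (fun j m => Rabs (zs m j - p j) < del) (fun j Hj => Hp j Hj del Hdel)) (U_tail U HU K)))
    as [m [A B]].
  specialize (Hcd (zs m) A). 
  assert (Hbeyond: forall j, (d <= j)%nat -> zs m j = p j).
  { intros j Hj. unfold zs, frac_pt, p. destruct (Nat.ltb_spec j d); [lia|auto]. }
  specialize (Hcd Hbeyond). unfold zs in Hcd. rewrite frac_pt_eq in Hcd by auto.
  specialize (Hys m). assert (INR K <= INR m) by (apply le_INR; auto).
  assert (Rabs (f (ys m)) <= Rabs (f (ys m) - f p) + Rabs (f p)).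
  { replace (f (ys m)) with ((f (ys m) - f p) + f p) at 1 by ring. apply Rabs_triang. }
  lra.
Qed.
End Bnd.


Lemma contT_vadd d f w : ContTorus d f -> (forall j, (d <= j)%nat -> w j = 0) ->
  ContTorus d (fun x => f (vadd x w)).
Proof.
  intros [[Ha Hp] Hc] Hw. split; [split|].
  - intros x y H. apply Ha. intros j Hj. unfold vadd. rewrite H; auto.
  - intros x j Hj. rewrite <- (Hp (vadd x w) j Hj). f_equal.
    apply functional_extensionality. intros i. unfold vadd, upd. destruct (Nat.eqb_spec i j); subst; ring.
  - intros x eps Heps. destruct (Hc (vadd x w) eps Heps) as [del [Hdel H]].
    exists del. split; auto. intros y Hy Hb. apply H.
    + intros j Hj. unfold vadd. replace (y j + w j - (x j + w j)) with (y j - x j) by ring. auto.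
    + intros j Hj. unfold vadd. rewrite Hb; auto.
Qed.

Lemma cont_const d (c : R) : ContTorus d (fun _ => c).
Proof.
  split; [split; auto|]. intros x eps Heps. exists 1. split; [lra|]. intros. rewrite Rminus_diag, Rabs_R0; auto.
Qed.

Lemma rp_nil d x : rp d nil x = 0.
Proof. reflexivity. Qed.

Section Main.
Variable d : nat.
Variable A : nat -> nat -> Z.
Variable b : pt.
Hypothesis hA : UpperUnipotent d A.
Hypothesis hUE : UniquelyErgodic d A b.

Definition linT (w : pt) : pt := fun j => if Nat.ltb j d then rsum d (fun i => w i * IZR (A i j)) else 0.

Lemma Tmap_vadd x w : (forall j, (d <= j)%nat -> w j = 0) ->
  Tmap d A b (vadd x w) = vadd (Tmap d A b x) (linT w).
Proof.
  intros Hw. apply functional_extensionality. intros j. unfold Tmap, vadd, linT.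
  destruct (Nat.ltb_spec j d).
  - replace (rsum d (fun i => (x i + w i) * IZR (A i j))) with (rsum d (fun i => x i * IZR (A i j) + w i * IZR (A i j))).
    rewrite rsum_plus. ring. apply rsum_ext; intros; ring.
  - rewrite Hw by lia. ring.
Qed.

Lemma linT_diag w s j : (forall i, (i < s)%nat -> w i = 0) -> (j <= s)%nat -> (j < d)%nat ->
  rsum d (fun i => w i * IZR (A i j)) = w j.
Proof.
  intros Hw Hjs Hj. destruct hA as [H1 H2].
  rewrite (rsum_single d (fun i => w i * IZR (A i j)) j Hj).
  - cbv beta. rewrite H1 by auto. simpl. ring.
  - intros i Hi Hij. destruct (Nat.lt_ge_cases i j).
    + rewrite Hw by lia. ring.
    + rewrite H2 by lia. simpl. ring.
Qed.

Lemma L_ext (L : (pt -> R) -> R) f g : (forall x, f x = g x) -> L f = L g.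
Proof. intros H. f_equal. apply functional_extensionality. auto. Qed.

Section Inv.
Variable L : (pt -> R) -> R.
Hypothesis HL : InvariantState d A b L.

Lemma L_zero : L (fun _ => 0) = 0.
Proof.
  destruct HL as [Hlin _].
  pose proof (Hlin (fun _ => 0) (fun _ => 0) 1 (cont_const d 0) (cont_const d 0)) as H.
  cbv beta in H. rewrite (L_ext L (fun x => 1 * 0 + 0) (fun _ => 0)) in H by (intros; ring). lra.
Qed.

Lemma L_add f g : ContTorus d f -> ContTorus d g -> L (fun x => f x + g x) = L f + L g.
Proof.
  intros Hf Hg. destruct HL as [Hlin _]. rewrite <- (Rmult_1_l (L f)), <- Hlin by auto.
  apply L_ext. intros; ring.
Qed.

Lemma L_opp f : ContTorus d f -> L (fun x => - f x) = - L f.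
Proof.
  intros Hf. destruct HL as [Hlin _].
  rewrite (L_ext L _ (fun x => -1 * f x + 0)) by (intros; ring).
  rewrite Hlin; auto. rewrite L_zero. ring. apply cont_const.
Qed.

Definition TInv s := forall w, (forall j, ((j < s)%nat \/ (d <= j)%nat) -> w j = 0) ->
  forall f, ContTorus d f -> L (fun x => f (vadd x w)) = L f.

Lemma TInv_d : TInv d.
Proof.
  intros w Hw f Hf. apply L_ext. intros x. f_equal. apply functional_extensionality. intros j.
  unfold vadd. rewrite Hw by lia. ring.
Qed.

Lemma TInv_step s : (s < d)%nat -> TInv (S s) -> TInv s.
Proof.
  intros Hs IH w Hw f Hf.
  assert (Hwd: forall j, (d <= j)%nat -> w j = 0) by (intros; apply Hw; right; auto).
  set (L' := fun g : pt -> R => L (fun x => g (vadd x w))).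
  assert (HL': InvariantState d A b L').
  { destruct HL as (Hlin & Hpos & H1 & Hinv). split; [|split; [|split]].
    - intros g h a Hg Hh. unfold L'. apply (Hlin (fun x => g (vadd x w)) (fun x => h (vadd x w))); apply contT_vadd; auto.
    - intros g Hg Hpg. unfold L'. apply Hpos; auto. apply contT_vadd; auto.
    - unfold L'. apply H1.
    - intros g Hg. unfold L'.
      set (w2 := fun j => linT w j - w j).
      assert (Hw2: forall j, ((j < S s)%nat \/ (d <= j)%nat) -> w2 j = 0).
      { intros j [Hj|Hj]; unfold w2, linT.
        - destruct (Nat.ltb_spec j d); [|lia].
          rewrite (linT_diag w s j); [ring| |lia|auto]. intros i Hi. apply Hw. left; auto.
        - destruct (Nat.ltb_spec j d); [lia|]. rewrite Hwd by auto. ring. }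
      assert (Hw2d: forall j, (d <= j)%nat -> w2 j = 0) by (intros; apply Hw2; right; auto).
      apply eq_trans with (L (fun x => (fun y => g (vadd (vadd y w2) w)) (Tmap d A b x))).
      { apply L_ext. intros x. cbv beta. rewrite Tmap_vadd by auto. f_equal. apply functional_extensionality. intros j.
          unfold vadd, w2. ring. }
      apply eq_trans with (L (fun y => g (vadd (vadd y w2) w))).
      { apply (Hinv (fun y => g (vadd (vadd y w2) w))). apply (contT_vadd d (fun z => g (vadd z w)) w2); auto. apply contT_vadd; auto. }
      apply (IH w2 Hw2 (fun z => g (vadd z w))). apply contT_vadd; auto. }
  destruct hUE as [_ Huniq]. apply (Huniq L' L HL' HL f Hf).
Qed.

Lemma TInv_0 : TInv 0.
Proof.
  assert (H: forall m, (m <= d)%nat -> TInv (d - m)).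
  { induction m; intros Hm.
    - rewrite Nat.sub_0_r. apply TInv_d.
    - apply TInv_step. lia. replace (S (d - S m)) with (d - m)%nat by lia. apply IHm. lia. }
  replace 0%nat with (d - d)%nat by lia. apply H. lia.
Qed.

Lemma L_term_zero k c : zp d k = false -> L (rp d ((k, c) :: nil)) = 0.
Proof.
  intros Hz. destruct (zp_false d k Hz) as [j [Hj Hk]].
  set (w := fun i => if Nat.eqb i j then / (2 * IZR (k j)) else 0).
  assert (Hw: forall i, ((i < 0)%nat \/ (d <= i)%nat) -> w i = 0).
  { intros i [Hi|Hi]; [lia|]. unfold w. destruct (Nat.eqb_spec i j); [lia|auto]. }
  pose proof (TInv_0 w Hw (rp d ((k, c) :: nil)) (rp_cont d _)) as H.
  assert (Hth: theta d k w = PI).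
  { unfold theta. rewrite (rsum_single d _ j Hj).
    - unfold w. rewrite Nat.eqb_refl. field. apply not_0_IZR; auto.
    - intros i Hi Hij. unfold w. destruct (Nat.eqb_spec i j); [lia|ring]. }
  rewrite (L_ext L _ (fun x => - rp d ((k, c) :: nil) x)) in H.
  - rewrite L_opp in H by apply rp_cont. lra.
  - intros x. rewrite !rp_cons, !rp_nil.
    rewrite trig_vadd, Hth, tt_PI. rewrite !trig_tt. cbn [fst snd]. rewrite tt_scale. unfold cscale. cbn [fst]. ring.
Qed.

Lemma L_list_zero l : (forall kc, In kc l -> zp d (fst kc) = false) -> L (rp d l) = 0.
Proof.
  induction l as [|[k c] l IH]; intros H.
  - apply L_zero.
  - rewrite (L_ext L _ (fun x => rp d ((k, c) :: nil) x + rp d l x)).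
    + rewrite L_add by apply rp_cont. rewrite L_term_zero, IH; auto.
      * ring.
      * intros; apply H; right; auto.
      * apply (H (k, c)); left; auto.
    + intros x. rewrite !rp_cons, rp_nil. ring.
Qed.
End Inv.

Definition avg (f : pt -> R) (N : nat) (x : pt) : R := rsum N (fun n => f (Titer d A b n x)) / INR N.

Section Emp.
Variable U : (nat -> Prop) -> Prop.
Hypothesis HU : IsUltra U.
Variable Nf : nat -> nat.
Variable xf : nat -> pt.
Hypothesis HN : forall m, (S m <= Nf m)%nat.

Definition Lemp (f : pt -> R) : R := Ulim U (fun m => avg f (Nf m) (xf m)).

Lemma avg_shift' f N x : 0 < INR N ->
  rsum N (fun n => f (Tmap d A b (Titer d A b n x))) / INR N - rsum N (fun n => f (Titer d A b n x)) / INR N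
  = (f (Titer d A b N x) - f x) / INR N.
Proof.
  intros HN0.
  assert (E: rsum N (fun n => f (Tmap d A b (Titer d A b n x))) - rsum N (fun n => f (Titer d A b n x))
           = f (Titer d A b N x) - f (Titer d A b O x)).
  { rewrite <- (rsum_telescope N (fun n => f (Titer d A b n x))).
    replace (rsum N (fun n => f (Titer d A b n x))) with (-1 * rsum N (fun n => -1 * f (Titer d A b n x)))
      by (rewrite rsum_scal; ring).
    replace (rsum N (fun n => f (Tmap d A b (Titer d A b n x))) - -1 * rsum N (fun n => -1 * f (Titer d A b n x)))
      with (rsum N (fun n => f (Tmap d A b (Titer d A b n x))) + rsum N (fun n => -1 * f (Titer d A b n x))) by ring.
    rewrite <- rsum_plus. apply rsum_ext. intros n _. simpl Titer. ring. }
  replace (f x) with (f (Titer d A b O x)) by reflexivity.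
  unfold Rdiv. rewrite <- E. ring.
Qed.

Lemma avg_bound f M N x : (0 < N)%nat -> (forall y, Rabs (f y) <= M) -> Rabs (avg f N x) <= M.
Proof.
  intros HN0 HM. unfold avg. assert (0 < INR N) by (apply lt_0_INR; auto).
  unfold Rdiv. rewrite Rabs_mult, Rabs_inv, (Rabs_right (INR N)) by lra.
  apply Rmult_le_reg_r with (INR N); auto. rewrite Rmult_assoc, Rinv_l, Rmult_1_r by lra.
  eapply Rle_trans; [apply rsum_abs|]. rewrite Rmult_comm, <- rsum_const.
  apply rsum_le. intros; auto.
Qed.

Lemma Lemp_conv f : ContTorus d f -> Uconv U (fun m => avg f (Nf m) (xf m)) (Lemp f).
Proof.
  intros Hf. destruct (cont_bounded U HU d f Hf) as [M HM].
  apply (Ulim_spec U). apply (Uconv_exists U HU _ M). intros m. apply avg_bound; auto. specialize (HN m). lia.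
Qed.

Lemma Lemp_state : InvariantState d A b Lemp.
Proof.
  split; [|split; [|split]].
  - intros f g a Hf Hg. unfold Lemp at 1. apply (Ulim_eq U HU).
    assert (E: (fun m => avg (fun x => a * f x + g x) (Nf m) (xf m)) =
               (fun m => a * avg f (Nf m) (xf m) + avg g (Nf m) (xf m))).
    { apply functional_extensionality. intros m. unfold avg. rewrite rsum_plus, rsum_scal.
      assert (0 < INR (Nf m)) by (apply lt_0_INR; specialize (HN m); lia). field. lra. }
    rewrite E. apply Uconv_lin; auto; apply Lemp_conv; auto.
  - intros f Hf Hp. apply (Uconv_nonneg U HU (fun m => avg f (Nf m) (xf m))); [|apply Lemp_conv; auto].
    intros m. unfold avg. apply Rmult_le_pos.
    + rewrite <- (rsum_zero (Nf m) (fun _ => 0)) by auto. apply rsum_le. auto.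
    + apply Rlt_le, Rinv_0_lt_compat, lt_0_INR. specialize (HN m). lia.
  - unfold Lemp. apply (Ulim_eq U HU).
    assert (E: (fun m => avg (fun _ => 1) (Nf m) (xf m)) = (fun _ => 1)).
    { apply functional_extensionality. intros m. unfold avg. rewrite rsum_const.
      assert (0 < INR (Nf m)) by (apply lt_0_INR; specialize (HN m); lia). field. lra. }
    rewrite E. apply (Uconv_const U HU).
  - intros f Hf. destruct (cont_bounded U HU d f Hf) as [M HM].
    unfold Lemp at 1. apply (Ulim_eq U HU).
    apply (Uconv_close U HU (fun m => avg f (Nf m) (xf m)) _ _ (2 * M)).
    + apply Lemp_conv; auto.
    + intros m. unfold avg.
      assert (HNm: 0 < INR (Nf m)) by (apply lt_0_INR; specialize (HN m); lia).
      rewrite (avg_shift' f (Nf m) (xf m)) by lra.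
      assert (HM2: Rabs (f (Titer d A b (Nf m) (xf m)) - f (xf m)) <= 2 * M).
      { eapply Rle_trans; [apply Rabs_triang|]. rewrite Rabs_Ropp. pose proof (HM (Titer d A b (Nf m) (xf m))). pose proof (HM (xf m)). lra. }
      unfold Rdiv. rewrite Rabs_mult, Rabs_inv, (Rabs_right (INR (Nf m))) by lra.
      assert (0 <= M) by (pose proof (HM (xf m)); pose proof (Rabs_pos (f (xf m))); lra).
      assert (INR (S m) <= INR (Nf m)) by (apply le_INR; auto).
      assert (0 < INR (S m)) by (apply lt_0_INR; lia).
      apply Rle_trans with (2 * M * / INR (Nf m)).
      * apply Rmult_le_compat_r; [apply Rlt_le, Rinv_0_lt_compat|]; lra.
      * apply Rmult_le_compat_l; [lra|]. apply Rinv_le_contravar; lra.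
Qed.
End Emp.

Hypothesis ultra_ex : exists U, IsUltra U.

Lemma unif_conv l : (forall kc, In kc l -> zp d (fst kc) = false) ->
  forall del, 0 < del -> exists N0, (0 < N0)%nat /\ forall N, (N0 <= N)%nat -> forall x, Rabs (avg (rp d l) N x) < del.
Proof.
  intros Hl del Hdel.
  destruct (classic (exists N0, (0 < N0)%nat /\ forall N, (N0 <= N)%nat -> forall x, Rabs (avg (rp d l) N x) < del)) as [E|E]; auto.
  exfalso. destruct ultra_ex as [U HU].
  assert (H: forall m : nat, exists p : nat * pt, (S m <= fst p)%nat /\ del <= Rabs (avg (rp d l) (fst p) (snd p))).
  { intros m. destruct (classic (exists p : nat * pt, (S m <= fst p)%nat /\ del <= Rabs (avg (rp d l) (fst p) (snd p)))) as [E2|E2]; auto.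
    exfalso. apply E. exists (S m). split; [lia|]. intros N HN x.
    destruct (Rlt_dec (Rabs (avg (rp d l) N x)) del) as [|Hn]; auto. exfalso. apply E2. exists (N, x). simpl. split; auto. lra. }
  set (pf := fun m => proj1_sig (constructive_indefinite_description _ (H m))).
  assert (Hpf: forall m, (S m <= fst (pf m))%nat /\ del <= Rabs (avg (rp d l) (fst (pf m)) (snd (pf m))))
    by (intros m; apply (proj2_sig (constructive_indefinite_description _ (H m)))).
  set (Nf := fun m => fst (pf m)). set (xf := fun m => snd (pf m)).
  assert (HN: forall m, (S m <= Nf m)%nat) by (intros m; apply Hpf).
  pose proof (Lemp_state U HU Nf xf HN) as HS.
  pose proof (L_list_zero _ HS l Hl) as Z0.
  pose proof (Uconv_lower U HU _ _ del (Lemp_conv U HU Nf xf HN (rp d l) (rp_cont d l))) as Hlow.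
  assert (del <= Rabs (Lemp U Nf xf (rp d l))) by (apply Hlow; intros m; apply Hpf).
  rewrite Z0, Rabs_R0 in H0. lra.
Qed.
End Main.


Definition Lin (pr : Cx -> R) : Prop :=
  (forall a c, pr (cadd a c) = pr a + pr c) /\ (forall r a, pr (cscale r a) = r * pr a) /\ pr (0, 0) = 0.
Lemma Lin_fst : Lin fst.
Proof. split; [|split]; intros; reflexivity. Qed.
Lemma Lin_snd : Lin snd.
Proof. split; [|split]; intros; reflexivity. Qed.

Lemma TP_flat pr d F N x : Lin pr ->
  pr (TP d (flat_map F (seq 0 N)) x) = rsum N (fun n => pr (TP d (F n) x)).
Proof.
  intros [H1 [H2 H3]]. induction N.
  - simpl. apply H3.
  - rewrite seq_S, flat_map_app. simpl flat_map. rewrite app_nil_r, TP_app, H1, IHN. reflexivity.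
Qed.

Section Assembly.
Variable d : nat.
Variable A : nat -> nat -> Z.
Variable b : pt.

Definition AL G N := flat_map (fun n => map (scT (/ INR N)) (Literate d A b n G)) (seq 0 N).
Definition UL G N := map (scT (-1))
  (flat_map (fun n => flat_map (fun m => map (scT (/ INR N)) (Literate d A b m G)) (seq 0 n)) (seq 0 N)).

Lemma AL_val pr G N x : Lin pr ->
  pr (TP d (AL G N) x) = rsum N (fun n => / INR N * pr (TP d G (Titer d A b n x))).
Proof.
  intros HL. unfold AL. rewrite TP_flat by auto. apply rsum_ext. intros n _.
  rewrite TP_scale, TP_Titer. destruct HL as [_ [H2 _]]. apply H2.
Qed.

Lemma UL_val pr G N x : Lin pr ->
  pr (TP d (UL G N) x) = -1 * rsum N (fun n => rsum n (fun m => / INR N * pr (TP d G (Titer d A b m x)))).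
Proof.
  intros HL. unfold UL. rewrite TP_scale. pose proof HL as [_ [H2 _]]. rewrite H2. f_equal.
  rewrite TP_flat by auto. apply rsum_ext. intros n _. rewrite TP_flat by auto. apply rsum_ext. intros m _.
  rewrite TP_scale, TP_Titer. apply H2.
Qed.

Lemma coh_real (h : pt -> R) N x : 0 < INR N ->
  let V := fun y => -1 * rsum N (fun n => rsum n (fun m => / INR N * h (Titer d A b m y))) in
  V (Tmap d A b x) - V x = h x - rsum N (fun n => / INR N * h (Titer d A b n x)).
Proof.
  intros HN V. unfold V.
  assert (E: forall n, rsum n (fun m => / INR N * h (Titer d A b m (Tmap d A b x))) -
                       rsum n (fun m => / INR N * h (Titer d A b m x)) = / INR N * (h (Titer d A b n x) - h x)).
  { intros n. rewrite !rsum_scal. rewrite <- Rmult_minus_distr_l. f_equal.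
    replace (h x) with (h (Titer d A b O x)) by reflexivity.
    rewrite <- (rsum_telescope n (fun m => h (Titer d A b m x))).
    replace (rsum n (fun m => h (Titer d A b m x))) with (-1 * rsum n (fun m => -1 * h (Titer d A b m x)))
      by (rewrite rsum_scal; ring).
    replace (rsum n (fun m => h (Titer d A b m (Tmap d A b x))) - -1 * rsum n (fun m => -1 * h (Titer d A b m x)))
      with (rsum n (fun m => h (Titer d A b m (Tmap d A b x))) + rsum n (fun m => -1 * h (Titer d A b m x))) by ring.
    rewrite <- rsum_plus. apply rsum_ext. intros m _. rewrite Titer_S. ring. }
  replace (-1 * rsum N (fun n => rsum n (fun m => / INR N * h (Titer d A b m (Tmap d A b x)))) -
           -1 * rsum N (fun n => rsum n (fun m => / INR N * h (Titer d A b m x))))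
    with (-1 * rsum N (fun n => rsum n (fun m => / INR N * h (Titer d A b m (Tmap d A b x))) -
                       rsum n (fun m => / INR N * h (Titer d A b m x)))).
  2:{ replace (rsum N (fun n => rsum n (fun m => / INR N * h (Titer d A b m x))))
        with (-1 * rsum N (fun n => -1 * rsum n (fun m => / INR N * h (Titer d A b m x)))) by (rewrite rsum_scal; ring).
      rewrite <- (Rmult_1_l (rsum N (fun n => rsum n (fun m => / INR N * h (Titer d A b m (Tmap d A b x)))))) at 1.
      rewrite <- (rsum_scal N 1).
      replace (-1 * rsum N (fun n => 1 * rsum n (fun m => / INR N * h (Titer d A b m (Tmap d A b x)))) -
               -1 * (-1 * rsum N (fun n => -1 * rsum n (fun m => / INR N * h (Titer d A b m x)))))
        with (-1 * (rsum N (fun n => 1 * rsum n (fun m => / INR N * h (Titer d A b m (Tmap d A b x)))) +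
                    rsum N (fun n => -1 * rsum n (fun m => / INR N * h (Titer d A b m x))))) by ring.
      rewrite <- rsum_plus. f_equal. apply rsum_ext. intros; ring. }
  rewrite (rsum_ext N _ (fun n => / INR N * h (Titer d A b n x) + (- / INR N * h x))).
  2:{ intros n _. rewrite E. ring. }
  rewrite rsum_plus, rsum_const. field. lra.
Qed.

End Assembly.


Definition AllK (P : (nat -> Z) -> Prop) (L : list ((nat -> Z) * Cx)) := forall kc, In kc L -> P (fst kc).

Lemma AllK_app P L1 L2 : AllK P L1 -> AllK P L2 -> AllK P (L1 ++ L2).
Proof. intros H1 H2 kc Hin. apply in_app_or in Hin. destruct Hin; auto. Qed.
Lemma AllK_scT P r L : AllK P L -> AllK P (map (scT r) L).
Proof. intros H kc Hin. apply in_map_iff in Hin. destruct Hin as [kc0 [<- Hin]]. apply (H kc0 Hin). Qed.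
Lemma AllK_imT P L : AllK P L -> AllK P (map imT L).
Proof. intros H kc Hin. apply in_map_iff in Hin. destruct Hin as [kc0 [<- Hin]]. apply (H kc0 Hin). Qed.
Lemma AllK_flat P {X} (F : X -> _) s : (forall n, AllK P (F n)) -> AllK P (flat_map F s).
Proof. intros H kc Hin. apply in_flat_map in Hin. destruct Hin as [n [_ Hin]]. apply (H n kc Hin). Qed.
Lemma AllK_filter P p L : (forall kc, p kc = true -> P (fst kc)) -> AllK P (filter p L).
Proof. intros H kc Hin. apply filter_In in Hin. apply H. apply Hin. Qed.
Lemma AllK_Lit P d A b n L : (forall k, P k -> P (kA d A k)) -> AllK P L -> AllK P (Literate d A b n L).
Proof.
  intros HP H. induction n; [exact H|]. unfold Literate in *. rewrite Nat.iter_succ.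
  intros kc Hin. apply in_map_iff in Hin. destruct Hin as [kc0 [<- Hin]]. apply HP. apply (IHn kc0 Hin).
Qed.
Lemma AllK_AL P d A b G N : (forall k, P k -> P (kA d A k)) -> AllK P G -> AllK P (AL d A b G N).
Proof. intros HP H. apply AllK_flat. intros n. apply AllK_scT. apply AllK_Lit; auto. Qed.

Lemma filter_nil {X} (q : X -> bool) L : (forall a, In a L -> q a = false) -> filter q L = nil.
Proof. induction L; simpl; intros H; auto. rewrite H by auto. apply IHL. intros; apply H; auto. Qed.

Lemma filter_map_imT (q : (nat -> Z) -> bool) L :
  filter (fun kc => q (fst kc)) (map imT L) = map imT (filter (fun kc => q (fst kc)) L).
Proof. induction L; simpl; auto. destruct (q (fst a)); simpl; rewrite IHL; auto. Qed.

Lemma TP_split d p L x : TP d L x = cadd (TP d (filter p L) x) (TP d (filter (fun a => negb (p a)) L) x).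
Proof.
  induction L; simpl filter.
  - rewrite !TP_nil. unfold cadd; simpl; f_equal; ring.
  - destruct (p a); simpl negb; rewrite !TP_cons, IHL; unfold cadd; simpl; f_equal; ring.
Qed.

Lemma pair_eq (a c : Cx) : fst a = fst c -> snd a = snd c -> a = c.
Proof. destruct a, c; simpl; intros -> ->; auto. Qed.

Lemma cmod_le z : cmod z <= Rabs (fst z) + Rabs (snd z).
Proof.
  unfold cmod. rewrite <- (sqrt_square (Rabs (fst z) + Rabs (snd z))).
  2:{ pose proof (Rabs_pos (fst z)); pose proof (Rabs_pos (snd z)); lra. }
  apply sqrt_le_1_alt.
  pose proof (Rabs_pos (fst z)); pose proof (Rabs_pos (snd z)).
  replace (fst z * fst z) with (Rabs (fst z) * Rabs (fst z)) by (rewrite <- Rabs_mult; apply Rabs_right; nra).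
  replace (snd z * snd z) with (Rabs (snd z) * Rabs (snd z)) by (rewrite <- Rabs_mult; apply Rabs_right; nra).
  nra.
Qed.

Lemma top_index d (k : nat -> Z) j : (j < d)%nat -> k j <> 0%Z ->
  exists i, (i < d)%nat /\ k i <> 0%Z /\ forall l, (i < l < d)%nat -> k l = 0%Z.
Proof.
  intros Hj Hk.
  assert (H: forall m, (m <= d)%nat -> (exists j, (j < m)%nat /\ k j <> 0%Z) ->
     exists i, (i < m)%nat /\ k i <> 0%Z /\ forall l, (i < l < m)%nat -> k l = 0%Z).
  { induction m; intros Hm [j0 [Hj0 Hk0]]; [lia|].
    destruct (Z.eq_dec (k m) 0) as [E|E].
    - destruct IHm as [i [Hi [Hki Hl]]]; [lia| |].
      + exists j0. split; auto. destruct (Nat.eq_dec j0 m); [subst; contradiction|lia].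
      + exists i. split; [lia|]. split; auto. intros l Hl2. destruct (Nat.eq_dec l m); [subst; auto|]. apply Hl; lia.
    - exists m. split; [lia|]. split; auto. intros; lia. }
  apply H; eauto.
Qed.

Section Final.
Variable d : nat.
Variable A : nat -> nat -> Z.
Variable b : pt.
Hypothesis hd : (2 <= d)%nat.
Hypothesis hA : UpperUnipotent d A.
Hypothesis hUE : UniquelyErgodic d A b.
Hypothesis ultra_ex : exists U, IsUltra U.

Definition nzk (k : nat -> Z) : Prop := zp d k = false.
Definition lastk (k : nat -> Z) : Prop := k (d - 1)%nat <> 0%Z.

Lemma nzk_kA k : nzk k -> nzk (kA d A k).
Proof.
  unfold nzk. intros H. destruct (zp_false d k H) as [j [Hj Hk]].
  destruct (top_index d k j Hj Hk) as [i [Hi [Hki Hl]]].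
  destruct (zp d (kA d A k)) eqn:E; auto. exfalso.
  apply Hki. rewrite <- (zp_true d (kA d A k) E i Hi). unfold kA. destruct hA as [H1 H2].
  rewrite (Zsum_single d _ i Hi). rewrite H1; auto; lia.
  intros j0 Hj0 Hne. destruct (Nat.lt_ge_cases j0 i).
  - rewrite H2 by lia. lia.
  - rewrite Hl by lia. lia.
Qed.

Lemma lastk_kA k : lastk k -> lastk (kA d A k).
Proof.
  unfold lastk. intros H. unfold kA. destruct hA as [H1 H2].
  rewrite (Zsum_single d _ (d - 1)) by (try lia; intros i Hi Hne; rewrite H2 by lia; lia).
  rewrite H1 by lia. lia.
Qed.

Lemma lastk_nzk k : lastk k -> nzk k.
Proof.
  unfold lastk, nzk. intros H. destruct (zp d k) eqn:E; auto. exfalso. apply H. apply (zp_true d); auto. lia.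
Qed.

Lemma avg_AL_fst G N x : 0 < INR N -> fst (TP d (AL d A b G N) x) = avg d A b (rp d G) N x.
Proof.
  intros HN. rewrite (AL_val d A b fst) by apply Lin_fst. unfold avg. rewrite rsum_scal. unfold rp. field. lra.
Qed.

Lemma avg_AL_snd G N x : 0 < INR N -> snd (TP d (AL d A b G N) x) = avg d A b (rp d (map imT G)) N x.
Proof.
  intros HN. rewrite (AL_val d A b snd) by apply Lin_snd. unfold avg. rewrite rsum_scal.
  rewrite (rsum_ext N _ (fun n => rp d (map imT G) (Titer d A b n x))).
  field. lra. intros n _. rewrite TP_im. reflexivity.
Qed.

Lemma core G : AllK nzk G -> forall eps, 0 < eps ->
  exists N, (0 < N)%nat /\ forall x, cmod (TP d (AL d A b G N) x) < eps.
Proof.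
  intros HG eps Heps.
  destruct (unif_conv d A b hA hUE ultra_ex G HG (eps / 2) ltac:(lra)) as [N1 [HN1 H1]].
  destruct (unif_conv d A b hA hUE ultra_ex (map imT G) (AllK_imT _ _ HG) (eps / 2) ltac:(lra)) as [N2 [HN2 H2]].
  exists (Nat.max N1 N2). split; [lia|]. intros x.
  assert (HN: 0 < INR (Nat.max N1 N2)) by (apply lt_0_INR; lia).
  eapply Rle_lt_trans; [apply cmod_le|].
  rewrite avg_AL_fst, avg_AL_snd by auto.
  specialize (H1 (Nat.max N1 N2) ltac:(lia) x). specialize (H2 (Nat.max N1 N2) ltac:(lia) x). lra.
Qed.

Lemma coh G N x : (0 < N)%nat ->
  csub (TP d G x) (TP d (AL d A b G N) x) =
  csub (TP d (UL d A b G N) (Tmap d A b x)) (TP d (UL d A b G N) x).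
Proof.
  intros HN0. assert (HN: 0 < INR N) by (apply lt_0_INR; lia).
  apply pair_eq; unfold csub; cbn [fst snd].
  - rewrite !(UL_val d A b fst) by apply Lin_fst. rewrite (AL_val d A b fst) by apply Lin_fst.
    rewrite (coh_real d A b (fun y => fst (TP d G y)) N x HN). reflexivity.
  - rewrite !(UL_val d A b snd) by apply Lin_snd. rewrite (AL_val d A b snd) by apply Lin_snd.
    rewrite (coh_real d A b (fun y => snd (TP d G y)) N x HN). reflexivity.
Qed.

Lemma TP_PL L0 G N x : TP d (L0 ++ map (scT (-1)) (AL d A b G N)) x = csub (TP d L0 x) (TP d (AL d A b G N) x).
Proof. rewrite TP_app, TP_scale. unfold cadd, csub, cscale. simpl. f_equal; ring. Qed.

Lemma csub_PL (z w : Cx) : csub z (csub z w) = w.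
Proof. destruct z, w; unfold csub; simpl; f_equal; ring. Qed.

End Final.


Lemma AllK_mono (P Q : (nat -> Z) -> Prop) L : (forall k, P k -> Q k) -> AllK P L -> AllK Q L.
Proof. intros H HL kc Hin. apply H, HL, Hin. Qed.

Section Thm.
Variable d : nat.
Variable A : nat -> nat -> Z.
Variable b : pt.
Hypothesis hd : (2 <= d)%nat.
Hypothesis hA : UpperUnipotent d A.
Hypothesis hUE : UniquelyErgodic d A b.
Hypothesis ultra_ex : exists U, IsUltra U.

Lemma part1 : forall Psi : pt -> Cx, TrigPoly d Psi -> forall eps : R, 0 < eps ->
     exists Psi' : pt -> Cx, TrigPoly d Psi' /\ SmoothCohConst d A b Psi' /\
       forall x : pt, cmod (csub (Psi x) (Psi' x)) < eps.
Proof.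
  intros Psi [l Hl] eps Heps.
  assert (EPsi: Psi = TP d l) by (apply functional_extensionality; intros; apply Hl). subst Psi.
  set (Gl := filter (fun kc => negb (zp d (fst kc))) l).
  set (Zl := filter (fun kc => zp d (fst kc)) l).
  assert (HG: AllK (nzk d) Gl).
  { apply AllK_filter. intros kc H. unfold nzk. apply Bool.negb_true_iff in H. auto. }
  destruct (core d A b hd hA hUE ultra_ex Gl HG eps Heps) as [N [HN Hdev]].
  set (PL := l ++ map (scT (-1)) (AL d A b Gl N)).
  assert (HAL: AllK (nzk d) (map (scT (-1)) (AL d A b Gl N))).
  { apply AllK_scT. apply AllK_AL; auto. apply (nzk_kA d A hd hA). }
  assert (Hfil: forall q : (nat -> Z) -> bool, (forall k, nzk d k -> q k = false) ->
            filter (fun kc => q (fst kc)) PL = filter (fun kc => q (fst kc)) l).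
  { intros q Hq. unfold PL. rewrite filter_app. rewrite (filter_nil _ (map (scT (-1)) (AL d A b Gl N))).
    apply app_nil_r. intros a Ha. apply Hq. apply HAL; auto. }
  assert (HZ: forall kc, In kc Zl -> zp d (fst kc) = true).
  { intros kc Hin. apply filter_In in Hin. apply Hin. }
  exists (TP d PL). split; [exists PL; intros; reflexivity|]. split.
  - exists (TP d Zl (fun _ => 0)). split.
    + split; intros x.
      * pose proof (int_upto d d (le_n d) PL x) as H.
        rewrite (Hfil (zp d)) in H by (intros k Hk; apply Hk).
        fold Zl in H. unfold rp in H at 2. rewrite (TP_kzero_const d Zl x (fun _ => 0) HZ) in H. exact H.
      * pose proof (int_upto d d (le_n d) (map imT PL) x) as H.
        rewrite filter_map_imT, (Hfil (zp d)) in H by (intros k Hk; apply Hk).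
        fold Zl in H. unfold rp in H at 2. rewrite <- TP_im in H.
        rewrite (TP_kzero_const d Zl x (fun _ => 0) HZ) in H.
        replace (fun x => snd (TP d PL x)) with (rp d (map imT PL)). exact H.
        apply functional_extensionality. intros y. rewrite TP_im. reflexivity.
    + exists (TP d (UL d A b Gl N)). split; [apply TP_smooth|]. intros x.
      rewrite <- coh by auto. unfold PL. rewrite TP_PL.
      rewrite (TP_split d (fun kc => zp d (fst kc)) l x). fold Zl Gl.
      rewrite (TP_kzero_const d Zl x (fun _ => 0) HZ).
      apply pair_eq; unfold csub, cadd; cbn [fst snd]; ring.
  - intros x. unfold PL. rewrite TP_PL, csub_PL. apply Hdev.
Qed.

Lemma part2 : forall Phi : pt -> Cx, QPoly d Phi -> forall eps : R, 0 < eps ->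
     exists Phi' : pt -> Cx, QPoly d Phi' /\ SmoothCoboundary d A b Phi' /\
       forall x : pt, cmod (csub (Phi x) (Phi' x)) < eps.
Proof.
  intros Phi [[l Hl] Hint] eps Heps.
  assert (EPhi: Phi = TP d l) by (apply functional_extensionality; intros; apply Hl). subst Phi.
  assert (Hj: (d - 1 < d)%nat) by lia.
  set (q := fun kc : (nat -> Z) * Cx => Z.eqb (fst kc (d - 1)%nat) 0).
  set (Gl := filter (fun a => negb (q a)) l).
  set (Zl := filter q l).
  assert (HZ0: forall x, TP d Zl x = (0, 0)).
  { intros x. destruct (Hint x) as [[pr1 H1] [pr2 H2]]. apply pair_eq; cbn [fst snd].
    - rewrite <- H1. symmetry. apply RiemInt_val. apply (rp_int d l x (d - 1) Hj).
    - rewrite <- H2. symmetry. apply RiemInt_val.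
      apply (is_RInt_ext (fun t => rp d (map imT l) (upd x (d - 1) t))).
      { intros t _. unfold rp. rewrite <- TP_im. reflexivity. }
      eapply is_RInt_val. apply (rp_int d (map imT l) x (d - 1) Hj).
      rewrite (filter_map_imT (fun k : nat -> Z => Z.eqb (k (d - 1)%nat) 0)). unfold rp. rewrite <- TP_im. reflexivity. }
  assert (Hsplit: forall x, TP d l x = TP d Gl x).
  { intros x. rewrite (TP_split d q l x). fold Zl Gl. rewrite HZ0. destruct (TP d Gl x).
    unfold cadd; simpl; f_equal; ring. }
  assert (HGl: AllK (lastk d) Gl).
  { apply AllK_filter. intros kc H. unfold lastk. apply Bool.negb_true_iff in H. unfold q in H.
    apply Z.eqb_neq in H. auto. }
  assert (HG: AllK (nzk d) Gl) by (apply (AllK_mono (lastk d)); auto; apply (lastk_nzk d hd)).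
  destruct (core d A b hd hA hUE ultra_ex Gl HG eps Heps) as [N [HN Hdev]].
  set (PL := Gl ++ map (scT (-1)) (AL d A b Gl N)).
  assert (HPL: AllK (lastk d) PL).
  { apply AllK_app; auto. apply AllK_scT. apply AllK_AL; auto. apply (lastk_kA d A hd hA). }
  assert (Hfil: forall L, AllK (lastk d) L -> filter (fun kc => Z.eqb (fst kc (d - 1)%nat) 0) L = nil).
  { intros L HL. apply filter_nil. intros a Ha. apply Z.eqb_neq. apply HL; auto. }
  exists (TP d PL). split; [split|split].
  - exists PL; intros; reflexivity.
  - intros x. split.
    + apply RiemInt_of. eapply is_RInt_val. apply (rp_int d PL x (d - 1) Hj).
      rewrite Hfil by auto. reflexivity.
    + apply RiemInt_of. apply (is_RInt_ext (fun t => rp d (map imT PL) (upd x (d - 1) t))).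
      { intros t _. unfold rp. rewrite <- TP_im. reflexivity. }
      eapply is_RInt_val. apply (rp_int d (map imT PL) x (d - 1) Hj).
      rewrite Hfil. reflexivity. apply AllK_imT; auto.
  - exists (TP d (UL d A b Gl N)). split; [apply TP_smooth|]. intros x.
    rewrite <- coh by auto. unfold PL. apply TP_PL.
  - intros x. rewrite Hsplit. unfold PL. rewrite TP_PL, csub_PL. apply Hdev.
Qed.
End Thm.

From mathcomp Require all_boot all_classical.
Module UF.
Import all_boot all_classical.
Local Open Scope classical_set_scope.
Lemma ultra_nat : exists U, IsUltra U.
Proof.
have [G [GU sFG]] := @ultraFilterLemma nat eventually eventually_filter.
exists G; split; first exact: filterT.
split; first by move=> h; have := @filter_not_empty _ G _ ; apply; rewrite -[set0]/(fun _ => False).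
split; first by move=> P Q; exact: filterI.
split; first by move=> P Q PQ; apply: filterS.
split; first by move=> P; exact: (in_ultra_setVsetC P GU).
move=> N; apply: sFG; exists N => // n /= /leP; done.
Qed.
End UF.

Theorem lemma2p3 (d : nat) (A : nat -> nat -> Z) (b : pt)
  (hd : (2 <= d)%nat) (hA : UpperUnipotent d A) (hAI : NotIdentity d A)
  (hUE : UniquelyErgodic d A b) :
  (forall Psi : pt -> Cx, TrigPoly d Psi -> forall eps : R, 0 < eps ->
     exists Psi' : pt -> Cx, TrigPoly d Psi' /\ SmoothCohConst d A b Psi' /\
       forall x : pt, cmod (csub (Psi x) (Psi' x)) < eps) /\
  (forall Phi : pt -> Cx, QPoly d Phi -> forall eps : R, 0 < eps ->
     exists Phi' : pt -> Cx, QPoly d Phi' /\ SmoothCoboundary d A b Phi' /\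
       forall x : pt, cmod (csub (Phi x) (Phi' x)) < eps).
Proof.
  split.
  - apply (part1 d A b hd hA hUE UF.ultra_nat).
  - apply (part2 d A b hd hA hUE UF.ultra_nat).
Qed.
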